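(* Let $G$ be a finite simple graph and let $k\ge 1$ and $c\ge 2$ be integers. For any positive integer $r$, if $G$ has a weak $kr$-guidance system of maximum outdegree at most $c$, then the $k$-distance power $G^k$ has a weak $r$-guidance system of maximum outdegree at most $2c^k$.
   Context: All graphs are finite, simple and undirected. An orientation of $G$ is a directed graph $\vec{H}$ on $V(G)$ such that every $(u,v)\in E(\vec{H})$ satisfies $uv\in E(G)$, and for every $uv\in E(G)$ at least one of $(u,v),(v,u)$ lies in $E(\vec{H})$ (both are allowed). A partial orientation of $G$ is a spanning directed subgraph of an orientation of $G$ (so each edge may be directed in neither, one, or both directions). For a partial orientation $\vec{H}$, $B_{\vec{H}}(v,a)$ denotes the set of vertices reachable from $v$ by a directed path in $\vec{H}$ of length at most $a$. A weak $r$-guidance system of $G$ is a partial orientation $\vec{H}$ of $G$ such that for any distinct vertices $u,v$ at distance $\ell\le r$ in $G$ there exist non-negative integers $a,b$ with $a+b=\ell-1$ such that $G$ contains an edge between $B_{\vec{H}}(u,a)$ and $B_{\vec{H}}(v,b)$. The $k$-distance power $G^k$ is the graph on $V(G)$ in which two distinct vertices are adjacent iff their distance in $G$ is at most $k$. *)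

(* Defs.v *)
From mathcomp Require Import all_boot.
Set Implicit Arguments. Unset Strict Implicit. Unset Printing Implicit Defensive.

Fixpoint reach_le (T : finType) (R : rel T) (u v : T) (n : nat) : bool :=
  match n with
  | 0 => u == v
  | n'.+1 => (u == v) || [exists w, R u w && reach_le R w v n']
  end.

Definition dist_is (T : finType) (e : rel T) (u v : T) (l : nat) : Prop :=
  reach_le e u v l /\ (forall m, m < l -> ~~ reach_le e u v m).

Definition simple_graph (T : finType) (e : rel T) : Prop :=
  symmetric e /\ irreflexive e.

Definition partial_orientation (T : finType) (e h : rel T) : Prop :=
  forall u v, h u v -> e u v.

Definition ball (T : finType) (h : rel T) (v : T) (a : nat) : {set T} :=
  [set x | reach_le h v x a].

Definition max_outdeg_le (T : finType) (h : rel T) (c : nat) : Prop :=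
  forall u, #|[set v | h u v]| <= c.

Definition weak_guidance (T : finType) (e : rel T) (r : nat) (h : rel T) : Prop :=
  partial_orientation e h /\
  forall u v l, u != v -> l <= r -> dist_is e u v l ->
    exists a b, a + b = l.-1 /\
      exists x y, [/\ x \in ball h u a, y \in ball h v b & e x y].

Definition gpower (T : finType) (e : rel T) (k : nat) : rel T :=
  fun u v => (u != v) && reach_le e u v k.

(* Main.v *)
Require Import Defs.
From mathcomp Require Import all_boot.
From mathcomp Require Import zify.

Section R.
Set Implicit Arguments.
Unset Strict Implicit.
Variable T : finType.

Lemma reach_refl (R : rel T) u n : reach_le R u u n.
Proof. by case: n => [|n] /=; rewrite eqxx. Qed.

Lemma reachS (R : rel T) u v n : reach_le R u v n -> reach_le R u v n.+1.
Proof.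
elim: n u => [|n IH] u /=; first by move=> ->.
case/orP => [->//|/existsP [w /andP [Ruw Hw]]].
apply/orP; right; apply/existsP; exists w; rewrite Ruw; exact: IH Hw.
Qed.

Lemma reach_mono (R : rel T) u v m n : m <= n -> reach_le R u v m -> reach_le R u v n.
Proof.
move=> /subnK <-; elim: (n - m) => // d IH H; rewrite addSn; exact/reachS/IH.
Qed.

Lemma reach_cat (R : rel T) u w v n m :
  reach_le R u w n -> reach_le R w v m -> reach_le R u v (n + m).
Proof.
elim: n u => [|n IH] u; first by move=> /eqP->.
move=> H Hwv; rewrite addSn; move: H => /orP [/eqP-> | /existsP [z /andP [Ruz Hz]]].
  by apply: (reach_mono _ Hwv); rewrite leqW // leq_addl.
apply/orP; right; apply/existsP; exists z; rewrite Ruz; exact: IH Hz Hwv.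
Qed.

Lemma reach_split (R : rel T) u v n m :
  reach_le R u v (n + m) -> exists w, reach_le R u w n /\ reach_le R w v m.
Proof.
elim: n u => [|n IH] u; first by move=> H; exists u; split; [apply: reach_refl|].
rewrite addSn => /orP [/eqP <- | /existsP [z /andP [Ruz Hz]]].
  by exists u; split; apply reach_refl.
have [w [H1 H2]] := IH _ Hz.
exists w; split=>//=; apply/orP; right; apply/existsP; exists z; by rewrite Ruz H1.
Qed.

Lemma reach_sub (R : rel T) (S : rel T) u v n : (forall x y, R x y -> S x y) ->
  reach_le R u v n -> reach_le S u v n.
Proof.
move=> RS; elim: n u => [|n IH] u //=.
case/orP => [->//|/existsP [w /andP [Ruw Hw]]].
apply/orP; right; apply/existsP; exists w; by rewrite (RS _ _ Ruw) (IH _ Hw).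
Qed.

Lemma reach_sym (R : rel T) u v n : symmetric R -> reach_le R u v n -> reach_le R v u n.
Proof.
move=> sR; elim: n u => [|n IH] u /=; first by rewrite eq_sym.
case/orP => [/eqP->|/existsP [z /andP [Ruz Hz]]]; first by rewrite eqxx.
have H1 : reach_le R z u 1.
  by rewrite /=; apply/orP; right; apply/existsP; exists u; rewrite sR Ruz eqxx.
by have := reach_cat (IH _ Hz) H1; rewrite addn1.
Qed.

Lemma reach_pred (R : rel T) u w n : reach_le R u w n -> u != w ->
  exists p, reach_le R u p n.-1 /\ R p w.
Proof.
elim: n u => [|n IH] u /=; first by move=> ->.
case/orP => [/eqP->|/existsP [z /andP [Ruz Hz]]]; first by rewrite eqxx.
move=> _; case: (eqVneq z w) => [Ezw|Nzw].
  by exists u; split; [apply reach_refl | rewrite -Ezw].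
have [p [H1 H2]] := IH _ Hz Nzw.
exists p; split=>//.
case: n IH Hz H1 => [|n] IH Hz H1 /=; first by rewrite /= (negbTE Nzw) in Hz.
apply/orP; right; apply/existsP; exists z; by rewrite Ruz H1.
Qed.

Lemma reach_pw (R : rel T) k i u x : reach_le R u x (k * i) -> reach_le (gpower R k) u x i.
Proof.
elim: i u => [|i IH] u; first by rewrite muln0.
rewrite mulnS => /reach_split [w [H1 H2]].
case: (eqVneq u w) => [Euw|Nuw]; first by rewrite Euw; apply: reachS; exact: IH H2.
rewrite /=; apply/orP; right; apply/existsP; exists w; by rewrite /gpower Nuw H1 /= IH.
Qed.

Lemma pw_reach (R : rel T) k i u x : reach_le (gpower R k) u x i -> reach_le R u x (k * i).
Proof.
elim: i u => [|i IH] u /=; first by rewrite muln0.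
case/orP => [/eqP->|/existsP [w /andP [/andP [_ H1] H2]]]; first by apply reach_refl.
rewrite mulnS; exact: reach_cat H1 (IH _ H2).
Qed.

Lemma card_bigcup_le (I : finType) (P : pred I) (F : I -> {set T}) :
  #|\bigcup_(i | P i) F i| <= \sum_(i | P i) #|F i|.
Proof.
elim/big_rec2: _ => [|i A s _ H]; first by rewrite cards0.
rewrite cardsU; apply: leq_trans (leq_subr _ _) _; by rewrite leq_add2l.
Qed.

Lemma card_ball (R : rel T) c : 2 <= c -> max_outdeg_le R c ->
  forall n u, #|ball R u n| < 2 * c ^ n.
Proof.
move=> c2 deg; elim=> [|n IH] u.
  have -> : ball R u 0 = [set u] by apply/setP => x; rewrite !inE eq_sym.
  by rewrite cards1.
have sub : ball R u n.+1 \subset u |: \bigcup_(w in [set v | R u v]) ball R w n.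
  apply/subsetP => x; rewrite !inE /= => /orP [/eqP->|/existsP [w /andP [Ruw Hw]]].
    by rewrite eqxx.
  apply/orP; right; apply/bigcupP; exists w; by rewrite !inE.
apply: leq_ltn_trans (subset_leq_card sub) _.
rewrite cardsU1.
have H1 : #|\bigcup_(w in [set v | R u v]) ball R w n| <= \sum_(w in [set v | R u v]) #|ball R w n|
  by apply: card_bigcup_le.
have H2 : \sum_(w in [set v | R u v]) #|ball R w n| <= #|[set v | R u v]| * (2 * c ^ n).-1.
  rewrite -sum_nat_const; apply: leq_sum => w _; have := IH w; lia.
have H3 := deg u.
have H4 : #|[set v | R u v]| * (2 * c ^ n).-1 <= c * (2 * c ^ n).-1 by apply: leq_mul.
have H5 : 0 < c ^ n by rewrite expn_gt0; lia.
rewrite expnS.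
have : c * (2 * c ^ n).-1 = 2 * (c * c ^ n) - c.
  rewrite -subn1 mulnBr muln1; lia.
move: (_ \notin _) => bb; case: bb => /=; lia.
Qed.

End R.

Theorem lemma5 (T : finType) (e : rel T) (k c r : nat) :
  simple_graph e -> 1 <= k -> 2 <= c -> 0 < r ->
  (exists h : rel T, weak_guidance e (k * r) h /\ max_outdeg_le h c) ->
  exists h' : rel T, weak_guidance (gpower e k) r h' /\ max_outdeg_le h' (2 * c ^ k).
Proof.
move=> [esym eirr] k1 c2 r0 [h [[hpo hg] hdeg]].
exists (gpower h k); split; last first.
  move=> u; apply: leq_trans (_ : #|ball h u k| <= _).
    apply subset_leq_card; apply/subsetP => x; rewrite !inE => /andP [_ ->]; done.
  exact/ltnW/card_ball.
have gsub : forall p q, gpower h k p q -> gpower e k p q.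
  move=> p q /andP [N H]; rewrite /gpower N /=; exact: reach_sub hpo H.
have gsym : forall p q, gpower e k p q -> gpower e k q p.
  move=> p q /andP [N H]; rewrite /gpower eq_sym N /=; exact: reach_sym.
split; first by move=> u v /gsub.
move=> u v l Nuv Hl [Hr Hmin].
have fin : forall i j p q, reach_le (gpower h k) u p i -> reach_le (gpower h k) v q j ->
   reach_le e p q k -> i + j <= l.-1 ->
   exists a b, a + b = l.-1 /\
      exists x y, [/\ x \in ball (gpower h k) u a, y \in ball (gpower h k) v b
                   & gpower e k x y].
  move=> i j p q Hp Hq Hpq Hij.
  case: (eqVneq p q) => [Epq|Npq]; last first.
    exists i, (l.-1 - i); split; first lia.
    exists p, q; split; rewrite ?inE //; first by apply: (reach_mono _ Hq); lia.
    by rewrite /gpower Npq.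
  subst q; case: (eqVneq u p) => [Eup|Nup].
    have Nvp : v != p by rewrite -Eup eq_sym.
    have [z [Hz1 Hz2]] := reach_pred Hq Nvp.
    exists i, (l.-1 - i); split; first lia.
    exists p, z; split; rewrite ?inE //; first by apply: (reach_mono _ Hz1); lia.
    exact/gsym/gsub.
  have [z [Hz1 Hz2]] := reach_pred Hp Nup.
  exists (l.-1 - j), j; split; first lia.
  exists z, p; split; rewrite ?inE //; first by apply: (reach_mono _ Hz1); lia.
  exact/gsub.
have Hre : reach_le e u v (k * l) := pw_reach Hr.
have ex : exists m, reach_le e u v m by exists (k * l).
case: (ex_minnP ex) => L HL HLmin.
have Lkl : L <= k * l := HLmin _ Hre.
have l0 : 0 < l by case: l Hr {Hmin Hre ex HLmin Lkl Hl fin} => //=; rewrite (negbTE Nuv).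
have L0 : 0 < L by case: L HL {HLmin Lkl} => //=; rewrite (negbTE Nuv).
have kL : k * l.-1 < L.
  rewrite ltnNge; apply/negP => H.
  have := Hmin l.-1; rewrite ltn_predL => /(_ l0) /negP; apply.
  apply: reach_pw; exact: reach_mono H HL.
have distL : dist_is e u v L.
  split => // m Hm; apply/negP => Hm'; have := HLmin _ Hm'; lia.
have Lkr : L <= k * r by apply: (leq_trans Lkl); apply: leq_mul.
have [a [b [Hab [x [y [Hx Hy Exy]]]]]] := hg u v L Nuv Lkr distL.
rewrite !inE in Hx Hy.
have k0 : 0 < k by [].
have Ea := divn_eq a k; have Eb := divn_eq b k.
have ra := ltn_pmod a k0; have rb := ltn_pmod b k0.
move: (a %/ k) (a %% k) (b %/ k) (b %% k) Ea Eb ra rb => a' ra' b' rb' Ea Eb ra rb.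
have Hx0 := Hx; have Hy0 := Hy.
rewrite Ea mulnC in Hx; rewrite Eb mulnC in Hy.
have [x' [Hx1 Hx2]] := reach_split Hx.
have [y' [Hy1 Hy2]] := reach_split Hy.
have Exy1 : reach_le e x y 1.
  by rewrite /=; apply/orP; right; apply/existsP; exists y; rewrite Exy eqxx.
have Hyy : reach_le e y y' rb' by apply: reach_sym => //; exact: reach_sub hpo Hy2.
have Hxy' := reach_cat Exy1 Hyy.
have ab : a + b + 1 = L by move: Hab L0; clear; lia.
case: (leqP (ra' + rb' + 1) k) => Hk.
  apply: (fin a' b' x' y' (reach_pw Hx1) (reach_pw Hy1)).
    apply: (reach_mono Hk).
    apply: (reach_mono _ (reach_cat (reach_sub hpo Hx2) Hxy')); by rewrite addnA addnAC.
  have : k * (a' + b') < k * l.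
    rewrite mulnDr ![k * _]mulnC; move: Ea Eb ab Lkl; clear; lia.
  rewrite ltn_pmul2l //; clear; lia.
apply: (fin a'.+1 b' x y' _ (reach_pw Hy1)).
    apply: reach_pw; apply: (reach_mono _ Hx0); rewrite Ea mulnS mulnC; move: ra; clear; lia.
  apply: (reach_mono _ Hxy'); move: rb; clear; lia.
have : k * (a'.+1 + b') < k * l.
  rewrite mulnDr mulnS ![k * _]mulnC; move: Ea Eb ab Lkl Hk; clear; lia.
rewrite ltn_pmul2l //; clear; lia.
Qed.
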